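(* If $x$, $y$ and $[x,y]$ are monic commutators in $P_n$, then $\sigma([x,y])=\sigma(x)\cup\sigma(y)$.
   Context: $P_n$ denotes the pure braid group on $n$ strands, generated by elements $p_{a,b}$ for $1\le a<b\le n$ subject to the relations: (A) $p_{a,b}p_{a,c}p_{b,c}=p_{a,c}p_{b,c}p_{a,b}=p_{b,c}p_{a,b}p_{a,c}$ for $1\le a<b<c\le n$; (B) $p_{a,b}p_{c,d}=p_{c,d}p_{a,b}$ and $p_{a,d}p_{b,c}=p_{b,c}p_{a,d}$ for $1\le a<b<c<d\le n$; (C) $p_{a,c}p_{b,c}^{-1}p_{b,d}p_{b,c}=p_{b,c}^{-1}p_{b,d}p_{b,c}p_{a,c}$ for $1\le a<b<c<d\le n$. Let $N=\{1,\dots,n\}$. For $S\subseteq N$, $P_S$ is the subgroup generated by the $p_{a,b}$ with $a,b\in S$. Commutator convention: $[x,y]=x^{-1}y^{-1}xy$. Monic commutators are defined recursively: each $p_{a,b}$ and $p_{a,b}^{-1}$ ($1\le a<b\le n$) is a monic commutator; if $x,y$ are monic commutators and $[x,y]\neq1$, then $[x,y]$ is a monic commutator. The support $\sigma(x)$ of $x\in P_n$ is the intersection of all $S\subseteq N$ such that $x\in P_S$. *)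

(* Defs.v *)
(* The pure braid group P_n is encoded by its presentation:
   elements are words in the generators p_{a,b}^{+-1}, and equality in P_n is
   the congruence [req] generated by free cancellation and relations (A),(B),(C).
   Strands are indexed 0-based by 'I_n (strand k+1 of the paper is k here). *)
From mathcomp Require Import all_boot.
Set Implicit Arguments. Unset Strict Implicit. Unset Printing Implicit Defensive.

Definition gen (n : nat) := {p : 'I_n * 'I_n | p.1 < p.2}.
Definition gfst n (g : gen n) : 'I_n := (val g).1.
Definition gsnd n (g : gen n) : 'I_n := (val g).2.

(* a letter: (g, false) = g, (g, true) = g^-1 *)
Definition letter (n : nat) := (gen n * bool)%type.
Definition word (n : nat) := seq (letter n).

Definition gp n (g : gen n) : word n := [:: (g, false)].
Definition gpi n (g : gen n) : word n := [:: (g, true)].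

Definition winv n (w : word n) : word n := rev (map (fun l => (l.1, ~~ l.2)) w).
Definition pcomm n (x y : word n) : word n := winv x ++ winv y ++ x ++ y.

Inductive req (n : nat) : word n -> word n -> Prop :=
| req_refl w : req w w
| req_sym u v : req u v -> req v u
| req_trans u v w : req u v -> req v w -> req u w
| req_ctx l r u v : req u v -> req (l ++ u ++ r) (l ++ v ++ r)
| req_cancel (l : letter n) : req [:: l; (l.1, ~~ l.2)] [::]
| req_A1 (gab gac gbc : gen n) :
    gfst gab = gfst gac -> gsnd gab = gfst gbc -> gsnd gac = gsnd gbc ->
    req (gp gab ++ gp gac ++ gp gbc) (gp gac ++ gp gbc ++ gp gab)
| req_A2 (gab gac gbc : gen n) :
    gfst gab = gfst gac -> gsnd gab = gfst gbc -> gsnd gac = gsnd gbc ->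
    req (gp gac ++ gp gbc ++ gp gab) (gp gbc ++ gp gab ++ gp gac)
| req_B1 (gab gcd : gen n) :
    gsnd gab < gfst gcd -> req (gp gab ++ gp gcd) (gp gcd ++ gp gab)
| req_B2 (gad gbc : gen n) :
    gfst gad < gfst gbc -> gsnd gbc < gsnd gad ->
    req (gp gad ++ gp gbc) (gp gbc ++ gp gad)
| req_C (gac gbc gbd : gen n) :
    gfst gac < gfst gbc -> gsnd gac = gsnd gbc -> gfst gbc = gfst gbd ->
    gsnd gbc < gsnd gbd ->
    req (gp gac ++ gpi gbc ++ gp gbd ++ gp gbc)
        (gpi gbc ++ gp gbd ++ gp gbc ++ gp gac).

Definition in_PS n (S : {set 'I_n}) (x : word n) : Prop :=
  exists2 w : word n, req x w &
    all (fun l : letter n => (gfst l.1 \in S) && (gsnd l.1 \in S)) w.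

Definition psupport n (x : word n) (i : 'I_n) : Prop :=
  forall S : {set 'I_n}, in_PS S x -> i \in S.

(* monic commutators, as elements of P_n (closed under equality in P_n) *)
Inductive monic (n : nat) : word n -> Prop :=
| monic_gen (g : gen n) (b : bool) : monic [:: (g, b)]
| monic_comm x y : monic x -> monic y -> ~ req (pcomm x y) [::] -> monic (pcomm x y)
| monic_eq x x' : monic x -> req x x' -> monic x'.

(* Main.v *)
Require Import Defs.
From mathcomp Require Import all_boot.
From Stdlib Require Import Classical.
From mathcomp Require Import zify.

Set Implicit Arguments. Unset Strict Implicit. Unset Printing Implicit Defensive.

Section S.
Variable n : nat.

Definition keep (i : 'I_n) (l : letter n) : bool := (gfst l.1 != i) && (gsnd l.1 != i).
Definition dw i (w : word n) : word n := filter (keep i) w.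

Lemma req_dw i (u v : word n) : req u v -> req (dw i u) (dw i v).
Proof.
elim=> {u v}.
- move=> w; exact: req_refl.
- move=> u v _ H; exact: req_sym.
- move=> u v w _ H1 _ H2; exact: req_trans H1 H2.
- move=> l r u v _ H; rewrite /dw !filter_cat; exact: req_ctx.
- move=> [g b]; rewrite /dw /keep /=; case: ((gfst g != i) && (gsnd g != i));
    [exact: (req_cancel (g,b)) | exact: req_refl].
- move=> gab gac gbc e1 e2 e3; rewrite /dw /keep /= -e1 -e2 -e3.
  case: (gfst gab == i); case: (gsnd gab == i); case: (gsnd gac == i) => /=;
    try exact: req_refl; exact: req_A1.
- move=> gab gac gbc e1 e2 e3; rewrite /dw /keep /= -e1 -e2 -e3.
  case: (gfst gab == i); case: (gsnd gab == i); case: (gsnd gac == i) => /=;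
    try exact: req_refl; exact: req_A2.
- move=> gab gcd h; rewrite /dw /keep /=.
  case: (gfst gab == i); case: (gsnd gab == i); case: (gfst gcd == i);
    case: (gsnd gcd == i) => /=; try exact: req_refl; exact: req_B1.
- move=> gad gbc h1 h2; rewrite /dw /keep /=.
  case: (gfst gad == i); case: (gsnd gad == i); case: (gfst gbc == i);
    case: (gsnd gbc == i) => /=; try exact: req_refl; exact: req_B2.
- move=> gac gbc gbd h1 e2 e3 h4; rewrite /dw /keep /= -e2 -e3.
  case: (gfst gac == i); case: (gsnd gac == i); case: (gfst gbc == i);
    case: (gsnd gbd == i) => /=; try exact: req_refl; try (apply: req_C; assumption).
  apply: (req_trans (v:=[:: (gac,false)])).
    exact: (req_ctx [:: (gac,false)] [::] (req_cancel (gbc,true))).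
  apply: req_sym; exact: (req_ctx [::] [:: (gac,false)] (req_cancel (gbc,true))).
Qed.


Lemma req_cat (u u' v v' : word n) : req u u' -> req v v' -> req (u ++ v) (u' ++ v').
Proof.
move=> H1 H2; apply: (req_trans (v:=u' ++ v)).
  exact: (req_ctx [::] v H1).
have := req_ctx u' [::] H2; by rewrite !cats0.
Qed.

Lemma winv_cons (a : letter n) w : winv (a :: w) = winv w ++ [:: (a.1, ~~ a.2)].
Proof. by rewrite /winv /= rev_cons cats1. Qed.

Lemma winv_cat (u v : word n) : winv (u ++ v) = winv v ++ winv u.
Proof. by rewrite /winv map_cat rev_cat. Qed.

Lemma winvK_l (w : word n) : req (winv w ++ w) [::].
Proof.
elim: w => [|[g b] w IH]; first exact: req_refl.
rewrite winv_cons /= -catA.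
apply: (req_trans (v:= winv w ++ [::] ++ w)); last exact IH.
change (req (winv w ++ [:: (g, ~~b); (g,b)] ++ w) (winv w ++ [::] ++ w)).
apply: req_ctx.
have := req_cancel (g, ~~ b); by rewrite /= negbK.
Qed.

Lemma winvK_r (w : word n) : req (w ++ winv w) [::].
Proof.
elim: w => [|[g b] w IH]; first exact: req_refl.
rewrite winv_cons /= catA.
apply: (req_trans (v:= [:: (g,b)] ++ [::] ++ [:: (g, ~~b)])).
  exact: (req_ctx [:: (g,b)] [:: (g, ~~b)] IH).
exact: (req_cancel (g,b)).
Qed.

Lemma req_winv (u v : word n) : req u v -> req (winv u) (winv v).
Proof.
move=> H.
apply: (req_trans (v:= winv u ++ (v ++ winv v))).
  have := req_cat (req_refl (winv u)) (req_sym (winvK_r v)); by rewrite cats0.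
rewrite catA.
apply: (req_trans (v:= [::] ++ winv v)); last exact: req_refl.
apply: req_cat; last exact: req_refl.
apply: req_trans (winvK_l u).
apply: req_cat; [exact: req_refl | exact: req_sym].
Qed.

Lemma req_pcomm (x x' y y' : word n) :
  req x x' -> req y y' -> req (pcomm x y) (pcomm x' y').
Proof.
move=> Hx Hy; rewrite /pcomm.
apply: req_cat; first exact: req_winv.
apply: req_cat; first exact: req_winv.
exact: req_cat.
Qed.

Lemma dw_winv i (w : word n) : dw i (winv w) = winv (dw i w).
Proof.
elim: w => [|a w IH] //.
move: IH; rewrite winv_cons /dw filter_cat => -> /=.
have -> : keep i (a.1, ~~ a.2) = keep i a by [].
by case: (keep i a); rewrite ?winv_cons ?cats0.
Qed.

Lemma dw_pcomm i (x y : word n) : dw i (pcomm x y) = pcomm (dw i x) (dw i y).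
Proof. by rewrite /pcomm /dw !filter_cat -!/(dw i _) !dw_winv. Qed.

Lemma pcomm_nil_l (y : word n) : req (pcomm [::] y) [::].
Proof. rewrite /pcomm /= ?cats0; exact: winvK_l. Qed.

Lemma pcomm_nil_r (y : word n) : req (pcomm y [::]) [::].
Proof. rewrite /pcomm /= ?cats0; exact: winvK_l. Qed.

Definition okS (S : {set 'I_n}) (l : letter n) := (gfst l.1 \in S) && (gsnd l.1 \in S).

Lemma all_winv S (w : word n) : all (okS S) (winv w) = all (okS S) w.
Proof. by rewrite /winv all_rev all_map. Qed.

Lemma in_PS_req S (x x' : word n) : req x x' -> in_PS S x -> in_PS S x'.
Proof. move=> H [w Hw Ha]; exists w => //; exact: req_trans (req_sym H) Hw. Qed.

Lemma psupport_req (x x' : word n) i : req x x' -> psupport x i -> psupport x' i.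
Proof. move=> H Hp S HS; apply: Hp; exact: in_PS_req (req_sym H) HS. Qed.

Lemma easy_dir (x y : word n) i :
  psupport (pcomm x y) i -> psupport x i \/ psupport y i.
Proof.
move=> H; apply: NNPP => Hn.
have [Hx Hy] : ~ psupport x i /\ ~ psupport y i by tauto.
have [S HS] := not_all_ex_not _ _ Hx.
have [[wx Hwx Hax] HiS] := imply_to_and _ _ HS.
have [T HT] := not_all_ex_not _ _ Hy.
have [[wy Hwy Hay] HiT] := imply_to_and _ _ HT.
have : i \in S :|: T.
  apply: H; exists (pcomm wx wy); first exact: req_pcomm.
  have sub : forall w, all (okS S) w \/ all (okS T) w -> all (okS (S :|: T)) w.
    move=> w [] Ha; apply: sub_all Ha => l /andP [h1 h2];
      by rewrite /okS !inE h1 h2 ?orbT.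
  change (all (okS (S :|: T)) (pcomm wx wy)).
  rewrite /pcomm !all_cat !all_winv.
  rewrite !sub //; by [left|right].
by rewrite inE => /orP [].
Qed.

Lemma monic_d (x : word n) : monic x -> forall i, psupport x i -> req (dw i x) [::].
Proof.
elim=> {x}.
- move=> g b i H.
  have : i \in [set gfst g; gsnd g].
    apply: H; exists [:: (g,b)]; first exact: req_refl.
    by rewrite /= !inE !eqxx orbT.
  rewrite !inE /dw /keep /= => /orP [] /eqP ->; rewrite eqxx ?andbF /=; exact: req_refl.
- move=> x y _ IHx _ IHy _ i H; rewrite dw_pcomm.
  case: (easy_dir H) => [/IHx Hx | /IHy Hy].
    apply: req_trans (pcomm_nil_l (dw i y)); apply: req_pcomm => //; exact: req_refl.
  apply: req_trans (pcomm_nil_r (dw i x)); apply: req_pcomm => //; exact: req_refl.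
- move=> x x' _ IH Hr i H.
  apply: req_trans (IH i (psupport_req (req_sym Hr) H)).
  exact: req_dw (req_sym Hr).
Qed.

Definition pos (w : word n) := count (fun l : letter n => ~~ l.2) w.
Definition neg (w : word n) := count (fun l : letter n => l.2) w.

Lemma req_inv (u v : word n) : req u v -> pos u + neg v = pos v + neg u.
Proof.
rewrite /pos /neg => H; induction H; try (simpl; lia);
  try (rewrite !count_cat; lia); by case: l => [g [|]].
Qed.

Lemma monic_nontriv (x : word n) : monic x -> ~ req x [::].
Proof.
elim=> {x}.
- by move=> g [|] /req_inv.
- by [].
- move=> x x' _ IH Hr H; apply: IH; exact: req_trans Hr H.
Qed.

End S.

Theorem proposition1p6 (n : nat) (x y : word n) :
  monic x -> monic y -> monic (pcomm x y) ->
  forall i : 'I_n, psupport (pcomm x y) i <-> (psupport x i \/ psupport y i).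
Proof.
move=> Mx My Mc i; split; first exact: easy_dir.
move=> H S [w Hw Ha].
case: (boolP (i \in S)) => // HiS; exfalso.
apply: (monic_nontriv Mc).
have Ew : dw i w = w.
  apply/all_filterP; apply: sub_all Ha => l /andP [h1 h2].
  by rewrite /keep; apply/andP; split; apply/eqP => E; rewrite E in h1 h2;
    rewrite ?h1 ?h2 in HiS.
apply: (req_trans Hw).
rewrite -Ew; apply: (req_trans (req_dw i (req_sym Hw))).
rewrite dw_pcomm; case: H => [/(monic_d Mx) Hx | /(monic_d My) Hy].
  apply: req_trans (pcomm_nil_l (dw i y)); apply: req_pcomm => //; exact: req_refl.
apply: req_trans (pcomm_nil_r (dw i x)); apply: req_pcomm => //; exact: req_refl.
Qed.
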